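(* Let $p,q$ be coprime positive integers with $\frac pq<\frac12$, and let $1\le k\le q-2p-2$. Then $P_{k,\frac pq}\triangleleft P_{k+1,\frac pq}$, i.e. $H_2(M_k)>H_2(M_{k+1})$ and $H_2(m_k)>H_2(m_{k+1})$, where $M_r,m_r$ denote the points of absolute maximum and absolute minimum of $P_{r,\frac pq}$.
   Context: $H_2:[0,1]\to[0,1]$ is $H_2(x)=3x$ on $I_0=[0,\frac13]$, $2-3x$ on $I_1=[\frac13,\frac23]$, $3x-2$ on $I_2=[\frac23,1]$. For coprime $p,q$ with $0<\frac pq<\frac12$ and $r\in\{0,1,\dots,q-2p\}$, $\Gamma_{r,\frac pq}$ is the bimodal over-twist pattern whose cyclic permutation $\Pi_{r,\frac pq}$ of $\{1,\dots,q\}$ (action on the points of the cycle labelled $x_1<\dots<x_q$) is: $j\mapsto j+p$ for $1\le j\le r$; $j\mapsto q-j+r+1$ for $r+1\le j\le r+p$; $j\mapsto 2p-j+r+1$ for $r+p+1\le j\le r+2p$; $j\mapsto j-p$ for $r+2p+1\le j\le q$. $P_{r,\frac pq}$ denotes the cycle of $H_2$ exhibiting $\Gamma_{r,\frac pq}$ singled out by the location of its extremal points as follows (the paper asserts it is unique): for $r=0$ and $r=q-2p$ its points $M_r,m_r$ lie in $I_1$, and for $1\le r\le q-2p-1$, $M_r\in I_1$ and $m_r\in I_2$. Here the point of absolute maximum $M_r$ (resp. absolute minimum $m_r$) of a cycle $P$ is the point of $P$ whose image under $H_2$ is the largest (resp. smallest) point of $P$. For two such cycles, $P_{r_2,\frac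 pq}\triangleleft P_{r_1,\frac pq}$ (''$P_{r_2,\frac pq}$ floats above $P_{r_1,\frac pq}$'') means $H_2(M_{r_2})>H_2(M_{r_1})$ and $H_2(m_{r_2})>H_2(m_{r_1})$. *)

(* Defs.v *)
From Stdlib Require Import Reals Lra Lia Arith.
Open Scope R_scope.

Definition H2 (x : R) : R :=
  if Rle_dec x (1/3) then 3 * x
  else if Rle_dec x (2/3) then 2 - 3 * x
  else 3 * x - 2.

Definition in_I0 (x : R) : Prop := 0 <= x <= 1/3.
Definition in_I1 (x : R) : Prop := 1/3 <= x <= 2/3.
Definition in_I2 (x : R) : Prop := 2/3 <= x <= 1.

(* The cyclic permutation Pi_{r,p/q} of {1,...,q} (1-based labels). *)
Definition Pi (q p r j : nat) : nat :=
  if Nat.leb j r then j + p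
  else if Nat.leb j (r + p) then q - j + r + 1
  else if Nat.leb j (r + 2 * p) then (2 * p + r + 1) - j
  else j - p.

(* x_1 < ... < x_q (x : nat -> R, only indices 1..q matter) is a cycle of
   H_2 exhibiting the pattern Gamma_{r,p/q}: H_2(x_j) = x_{Pi(j)}. *)
Definition exhibits (q p r : nat) (x : nat -> R) : Prop :=
  (forall j, (1 <= j <= q)%nat -> 0 <= x j <= 1) /\
  (forall i j, (1 <= i)%nat -> (i < j)%nat -> (j <= q)%nat -> x i < x j) /\
  (forall j, (1 <= j <= q)%nat -> H2 (x j) = x (Pi q p r j)).

(* Point of absolute maximum / minimum of the cycle {x_1,...,x_q}: the point
   of the cycle whose image under H_2 is the largest / smallest point. *)
Definition abs_max_pt (q : nat) (x : nat -> R) (y : R) : Prop :=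
  exists j, (1 <= j <= q)%nat /\ y = x j /\ H2 y = x q.
Definition abs_min_pt (q : nat) (x : nat -> R) (y : R) : Prop :=
  exists j, (1 <= j <= q)%nat /\ y = x j /\ H2 y = x 1%nat.

Definition is_P (q p r : nat) (x : nat -> R) : Prop :=
  exhibits q p r x /\
  (forall M m, abs_max_pt q x M -> abs_min_pt q x m ->
     ((r = 0 \/ r = q - 2 * p)%nat -> in_I1 M /\ in_I1 m) /\
     ((1 <= r <= q - 2 * p - 1)%nat -> in_I1 M /\ in_I2 m)).

(* Main.v *)
Require Import Defs.
From Stdlib Require Import Reals Arith Lra Lia ZArith.

Definition cg (p : nat) (a b : Z) : Prop := exists k : Z, (a - b = k * Z.of_nat p)%Z.

Lemma cg_window p a b c : (1 <= p)%nat -> cg p a b ->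
  (c <= a < c + Z.of_nat p)%Z -> (c <= b < c + Z.of_nat p)%Z -> a = b.
Proof. intros Hp [k Hk] Ha Hb.
  destruct (Z.lt_trichotomy k 0) as [Hl|[He|Hg]].
  - assert (k * Z.of_nat p <= - Z.of_nat p)%Z by nia. lia.
  - subst. lia.
  - assert (k * Z.of_nat p >= Z.of_nat p)%Z by nia. lia.
Qed.

Lemma chain_up (p a : nat) (P : nat -> Prop) :
  (1 <= p)%nat ->
  (forall s, (1 <= s < a)%nat -> P (s + p)%nat -> P s) ->
  forall s, (1 <= s <= a + p - 1)%nat ->
  exists l, (a <= l <= a + p - 1)%nat /\ cg p (Z.of_nat l) (Z.of_nat s) /\ (P l -> P s).
Proof.
  intros Hp Hst.
  assert (H : forall n s, (a + p - s <= n)%nat -> (1 <= s <= a + p - 1)%nat ->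
    exists l, (a <= l <= a + p - 1)%nat /\ cg p (Z.of_nat l) (Z.of_nat s) /\ (P l -> P s)).
  { induction n; intros s Hn Hs.
    - exists s. split; [lia|]. split; [exists 0%Z; lia| auto].
    - destruct (le_lt_dec a s) as [Ha|Ha].
      + exists s. split; [lia|]. split; [exists 0%Z; lia| auto].
      + destruct (IHn (s + p)%nat) as [l [Hl [[k Hk] Hi]]]; [lia|lia|].
        exists l. split; [lia|]. split.
        * exists (k + 1)%Z. lia.
        * intro HP. apply Hst; [lia|]. auto. }
  intros s Hs. apply (H (a + p - s)%nat); lia.
Qed.

Lemma chain_down (p a N : nat) (P : nat -> Prop) :
  (1 <= p)%nat ->
  (forall t, (a + p <= t <= N)%nat -> P (t - p)%nat -> P t) ->
  forall t, (a <= t <= N)%nat ->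
  exists l, (a <= l <= a + p - 1)%nat /\ cg p (Z.of_nat l) (Z.of_nat t) /\ (P l -> P t).
Proof.
  intros Hp Hst.
  assert (H : forall n t, (t <= n)%nat -> (a <= t <= N)%nat ->
    exists l, (a <= l <= a + p - 1)%nat /\ cg p (Z.of_nat l) (Z.of_nat t) /\ (P l -> P t)).
  { induction n; intros t Hn Ht.
    - exists t. split; [lia|]. split; [exists 0%Z; lia| auto].
    - destruct (le_lt_dec (a + p) t) as [Ha|Ha].
      + destruct (IHn (t - p)%nat) as [l [Hl [[k Hk] Hi]]]; [lia|lia|].
        exists l. split; [lia|]. split.
        * exists (k - 1)%Z. lia.
        * intro HP. apply Hst; [lia|]. auto.
      + exists t. split; [lia|]. split; [exists 0%Z; lia| auto]. }
  intros t Ht. apply (H t); lia.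
Qed.

Lemma roundQ p q r (E S : nat -> Prop) :
  (1 <= p)%nat -> (1 <= r)%nat -> (r + 2*p + 2 <= q)%nat ->
  (forall j, (r+2*p+2 <= j <= q)%nat -> E (j - p)%nat -> E j) ->
  (forall j, (r+p+2 <= j <= r+2*p-1)%nat -> S (2*p+r+1-j)%nat -> E j) ->
  E (r+2*p)%nat -> E (r+2*p+1)%nat ->
  (forall i, (1 <= i <= r)%nat -> S (i+p)%nat -> S i) ->
  (forall i, (r+1 <= i <= r+p)%nat -> E (q-i+r+1)%nat -> S i) ->
  forall n t, (q - p + 1 <= t <= q)%nat ->
  cg p (Z.of_nat t + Z.of_nat n * Z.of_nat q) (Z.of_nat r + 1) -> E t.
Proof.
  intros Hp Hr Hq e2 e4 ev1 ev2 s1 s2.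
  induction n; intros t Ht Hc.
  - destruct (chain_down p (r+p+2) q E Hp) with (t := t) as [l [Hl [Hlt Hi]]].
    { intros t' Ht'. apply e2. lia. } { lia. }
    apply Hi.
    destruct (le_lt_dec (r+2*p) l) as [H1|H1].
    + assert (l = r+2*p \/ l = r+2*p+1)%nat as [->| ->] by lia; assumption.
    + exfalso. destruct Hlt as [k1 Hk1]. destruct Hc as [k2 Hk2].
      assert (l = r + 2*p + 1)%nat; [|lia].
      apply Nat2Z.inj. apply (cg_window p _ _ (Z.of_nat (r+p+2))); [lia| |lia|lia].
      exists (k1 + k2 - 2)%Z. lia.
  - destruct (chain_down p (r+p+2) q E Hp) with (t := t) as [l [Hl [Hlt Hi]]].
    { intros t' Ht'. apply e2. lia. } { lia. }
    apply Hi.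
    destruct (le_lt_dec (r+2*p) l) as [H1|H1].
    + assert (l = r+2*p \/ l = r+2*p+1)%nat as [->| ->] by lia; assumption.
    + apply e4; [lia|].
      destruct (chain_up p (r+1) S Hp) with (s := (2*p+r+1-l)%nat) as [l' [Hl' [Hlt' Hi']]].
      { intros s Hs. apply s1. lia. } { lia. }
      apply Hi'. apply s2; [lia|].
      apply (IHn (q - l' + r + 1)%nat); [lia|].
      destruct Hlt as [k1 Hk1]. destruct Hc as [k2 Hk2]. destruct Hlt' as [k3 Hk3].
      exists (k2 + k1 - k3 - 2)%Z. lia.
Qed.

Lemma round1 p q r (E S : nat -> Prop) :
  (1 <= p)%nat -> (1 <= r)%nat -> (r + 2*p + 2 <= q)%nat ->
  (forall j, (1 <= j <= r)%nat -> E (j + p)%nat -> E j) ->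
  (forall j, (r+2 <= j <= r+p)%nat -> S (q-j+r+1)%nat -> E j) ->
  E (r+1)%nat ->
  (forall i, (r+p+1 <= i <= r+2*p-1)%nat -> E (2*p+r+1-i)%nat -> S i) ->
  (forall i, (r+2*p+1 <= i <= q-1)%nat -> S (i-p)%nat -> S i) ->
  forall n s, (1 <= s <= p)%nat ->
  cg p (Z.of_nat s - Z.of_nat n * Z.of_nat q) (Z.of_nat r + 1) ->
  (forall m, (m < n)%nat -> ~ cg p (Z.of_nat s - Z.of_nat m * Z.of_nat q) (Z.of_nat q + 1)) ->
  E s.
Proof.
  intros Hp Hr Hq e1 e3 ev s3 s4.
  induction n; intros s Hs Hc Hbad.
  - destruct (chain_up p (r+1) E Hp) with (s := s) as [l [Hl [Hlt Hi]]].
    { intros s' Hs'. apply e1. lia. } { lia. }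
    apply Hi.
    assert (l = r + 1)%nat as -> ; [|assumption].
    destruct Hlt as [k1 Hk1]. destruct Hc as [k2 Hk2].
    apply Nat2Z.inj. apply (cg_window p _ _ (Z.of_nat (r+1))); [lia| |lia|lia].
    exists (k1 + k2)%Z. lia.
  - destruct (chain_up p (r+1) E Hp) with (s := s) as [l [Hl [Hlt Hi]]].
    { intros s' Hs'. apply e1. lia. } { lia. }
    apply Hi.
    destruct (Nat.eq_dec l (r+1)) as [->|Hne]; [assumption|].
    apply e3; [lia|].
    destruct (chain_down p (r+p+1) (q-1) S Hp) with (t := (q-l+r+1)%nat) as [l2 [Hl2 [Hlt2 Hi2]]].
    { intros t' Ht'. apply s4. lia. } { lia. }
    apply Hi2.
    destruct (Nat.eq_dec l2 (r+2*p)) as [Heq|Hne2].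
    + exfalso. apply (Hbad 0%nat); [lia|].
      destruct Hlt as [k1 Hk1]. destruct Hlt2 as [k2 Hk2].
      exists (k2 - k1 - 2)%Z. lia.
    + apply s3; [lia|].
      apply (IHn (2*p+r+1-l2)%nat); [lia| |].
      * destruct Hlt as [k1 Hk1]. destruct Hlt2 as [k2 Hk2]. destruct Hc as [k3 Hk3].
        exists (k3 + 2 + k1 - k2)%Z. lia.
      * intros m Hm [k4 Hk4]. apply (Hbad (m+1)%nat); [lia|].
        destruct Hlt as [k1 Hk1]. destruct Hlt2 as [k2 Hk2].
        exists (k4 - 2 - k1 + k2)%Z. lia.
Qed.

Lemma bez p q : (1 <= p)%nat -> Nat.gcd p q = 1%nat ->
  exists a b : Z, (a * Z.of_nat p = 1 + b * Z.of_nat q)%Z.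
Proof.
  intros Hp Hg. destruct (Nat.gcd_bezout_pos p q) as [a [b H]]; [lia|].
  rewrite Hg in H. exists (Z.of_nat a), (Z.of_nat b). lia.
Qed.

Lemma startQ p q r : (1 <= p)%nat -> Nat.gcd p q = 1%nat ->
  exists n : nat, cg p (Z.of_nat q + Z.of_nat n * Z.of_nat q) (Z.of_nat r + 1).
Proof.
  intros Hp Hg. destruct (bez p q Hp Hg) as [a [b Hab]].
  set (P := Z.of_nat p) in *. set (Q := Z.of_nat q) in *. set (R := Z.of_nat r).
  set (X := (- (R + 1) * b - 1)%Z).
  assert (HP : (P > 0)%Z) by (unfold P; lia).
  pose proof (Z.div_mod X P ltac:(lia)) as Hd.
  pose proof (Z.mod_pos_bound X P ltac:(lia)) as Hb.
  exists (Z.to_nat (X mod P)).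
  rewrite Z2Nat.id by lia.
  exists (- ((R + 1) * a + (X / P) * Q))%Z.
  assert (E1 : (X mod P + 1 = - (R+1) * b - P * (X / P))%Z) by (unfold X in *; lia).
  replace (Q + X mod P * Q)%Z with ((X mod P + 1) * Q)%Z by ring.
  rewrite E1.
  replace ((- (R + 1) * b - P * (X / P)) * Q)%Z with (- (R+1) * (b * Q) - P * (X/P) * Q)%Z by ring.
  replace (b * Q)%Z with (a * P - 1)%Z by lia.
  unfold P; ring.
Qed.

Lemma start1 p q r : (1 <= p)%nat -> Nat.gcd p q = 1%nat ->
  exists n : nat, cg p (1 - Z.of_nat n * Z.of_nat q) (Z.of_nat r + 1) /\
   (forall m, (m < n)%nat -> ~ cg p (1 - Z.of_nat m * Z.of_nat q) (Z.of_nat q + 1)).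
Proof.
  intros Hp Hg. destruct (bez p q Hp Hg) as [a [b Hab]].
  set (P := Z.of_nat p) in *. set (Q := Z.of_nat q) in *. set (R := Z.of_nat r).
  set (X := (R * b)%Z).
  assert (HP : (P > 0)%Z) by (unfold P; lia).
  pose proof (Z.div_mod X P ltac:(lia)) as Hd.
  pose proof (Z.mod_pos_bound X P ltac:(lia)) as Hb.
  exists (Z.to_nat (X mod P)).
  rewrite Z2Nat.id by lia. split.
  - exists ((X / P) * Q - R * a)%Z.
    assert (E1 : (X mod P = R * b - P * (X / P))%Z) by (unfold X in *; lia).
    rewrite E1.
    replace (1 - (R * b - P * (X / P)) * Q - (R + 1))%Z with (- R * (b * Q) + P * (X/P) * Q - R)%Z by ring.
    replace (b * Q)%Z with (a * P - 1)%Z by lia.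
    unfold P; ring.
  - intros m Hm [k Hk].
    assert (Hm1 : (Z.of_nat (m + 1) = P * (Z.of_nat (m+1) * a + k * b))%Z).
    { assert (H1 : (Z.of_nat (m+1) * Q = - k * P)%Z) by lia.
      assert (H2 : (Z.of_nat (m+1) * (b * Q) = - k * P * b)%Z) by (rewrite Z.mul_assoc, (Z.mul_comm _ b), <- Z.mul_assoc, H1; ring).
      replace (b * Q)%Z with (a * P - 1)%Z in H2 by lia.
      lia. }
    assert (Z.of_nat (m+1) = P); [|lia].
    apply (cg_window p _ _ 1%Z); [lia| |lia|lia].
    exists (Z.of_nat (m + 1) * a + k * b - 1)%Z. unfold P in *. lia.
Qed.


Lemma H2_0 x : x <= 1/3 -> H2 x = 3 * x.
Proof. intros. unfold H2. destruct (Rle_dec x (1/3)); [lra|contradiction]. Qed.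
Lemma H2_1 x : 1/3 <= x <= 2/3 -> H2 x = 2 - 3 * x.
Proof. intros. unfold H2. destruct (Rle_dec x (1/3)); [lra|]. destruct (Rle_dec x (2/3)); lra. Qed.
Lemma H2_2 x : 2/3 <= x -> H2 x = 3 * x - 2.
Proof. intros. unfold H2. destruct (Rle_dec x (1/3)); [lra|]. destruct (Rle_dec x (2/3)); lra. Qed.

Ltac pisolve := unfold Pi; repeat match goal with |- context[Nat.leb ?a ?b] => destruct (Nat.leb_spec a b) end; lia.

Lemma orbit_facts q p r x : (1 <= p)%nat -> (1 <= r)%nat -> (r + 2*p + 1 <= q)%nat -> is_P q p r x ->
  (forall j, (1<=j<=q)%nat -> 0 <= x j <= 1) /\
  (forall i j, (1<=i)%nat -> (i<j)%nat -> (j<=q)%nat -> x i < x j) /\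
  (forall j, (1 <= j <= r)%nat -> x (j+p)%nat = 3 * x j) /\
  (forall j, (r+1 <= j <= r+p)%nat -> x (q-j+r+1)%nat = 2 - 3 * x j) /\
  (forall j, (r+p+1 <= j <= r+2*p-1)%nat -> x (2*p+r+1-j)%nat = 2 - 3 * x j) /\
  (forall j, (r+2*p+1 <= j <= q)%nat -> x (j-p)%nat = 3 * x j - 2) /\
  x 1%nat = 3 * x (r+2*p)%nat - 2 /\ 1/3 <= x (r+1)%nat /\ 2/3 <= x (r+2*p)%nat.
Proof.
  intros Hp Hr Hq [[Hb [Hinc Hdyn]] Hloc].
  assert (HM : abs_max_pt q x (x (r+1)%nat)).
  { exists (r+1)%nat. split; [lia|]. split; [reflexivity|].
    rewrite Hdyn by lia. f_equal. pisolve. }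
  assert (Hm : abs_min_pt q x (x (r+2*p)%nat)).
  { exists (r+2*p)%nat. split; [lia|]. split; [reflexivity|].
    rewrite Hdyn by lia. f_equal. pisolve. }
  destruct (Hloc _ _ HM Hm) as [_ Hl]. destruct Hl as [[HM1 HM2] [Hm1 Hm2]]; [lia|].
  assert (Hle : forall i j, (1 <= i)%nat -> (i <= j)%nat -> (j <= q)%nat -> x i <= x j).
  { intros i j H1 H2 H3. destruct (Nat.eq_dec i j) as [->|]; [lra|]. left. apply Hinc; lia. }
  assert (Hxq : H2 (x (r+1)%nat) = x q).
  { rewrite Hdyn by lia. f_equal. pisolve. }
  assert (Hx1 : H2 (x (r+2*p)%nat) = x 1%nat).
  { rewrite Hdyn by lia. f_equal. pisolve. }
  rewrite H2_1 in Hxq by lra. rewrite H2_2 in Hx1 by lra.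
  assert (C0 : forall j, (1 <= j <= r)%nat -> x j <= 1/3).
  { intros j Hj. destruct (Rle_dec (x j) (1/3)) as [|Hn]; [assumption|exfalso].
    assert (x j < x (r+1)%nat) by (apply Hinc; lia).
    assert (Hd := Hdyn j ltac:(lia)). rewrite H2_1 in Hd by lra.
    replace (Pi q p r j) with (j+p)%nat in Hd by pisolve.
    assert (x (j+p)%nat <= x q) by (apply Hle; lia). lra. }
  assert (C1 : forall j, (r+1 <= j <= r+2*p-1)%nat -> 1/3 <= x j <= 2/3).
  { intros j Hj. split.
    - assert (x (r+1)%nat <= x j) by (apply Hle; lia). lra.
    - destruct (Nat.eq_dec j (r+1)) as [->|Hne]; [assumption|].
      assert (x j <= x (r+2*p-1)%nat) by (apply Hle; lia).
      destruct (Rle_dec (x (r+2*p-1)%nat) (2/3)) as [|Hn]; [lra|exfalso].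
      assert (Hd := Hdyn (r+2*p-1)%nat ltac:(lia)). rewrite H2_2 in Hd by lra.
      replace (Pi q p r (r+2*p-1)) with 2%nat in Hd by pisolve.
      assert (x (r+2*p-1)%nat < x (r+2*p)%nat) by (apply Hinc; lia).
      assert (x 1%nat < x 2%nat) by (apply Hinc; lia). lra. }
  split; [exact Hb|]. split; [exact Hinc|].
  split.
  { intros j Hj. rewrite <- (H2_0 (x j)) by (apply C0; lia). rewrite Hdyn by lia. f_equal. pisolve. }
  split.
  { intros j Hj. rewrite <- (H2_1 (x j)) by (apply C1; lia). rewrite Hdyn by lia. f_equal. pisolve. }
  split.
  { intros j Hj. rewrite <- (H2_1 (x j)) by (apply C1; lia). rewrite Hdyn by lia. f_equal. pisolve. }
  split.
  { intros j Hj. assert (x (r+2*p)%nat <= x j) by (apply Hle; lia).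
    rewrite <- (H2_2 (x j)) by lra. rewrite Hdyn by lia. f_equal. pisolve. }
  split; [lra|]. split; lra.
Qed.
Open Scope R_scope.

Theorem mainTheorem12 (p q k : nat) (xk xk1 : nat -> R) (Mk Mk1 mk mk1 : R) :
  (0 < p)%nat -> (0 < q)%nat -> Nat.gcd p q = 1%nat -> (2 * p < q)%nat ->
  (1 <= k)%nat -> (k <= q - 2 * p - 2)%nat ->
  is_P q p k xk -> is_P q p (k + 1) xk1 ->
  abs_max_pt q xk Mk -> abs_min_pt q xk mk ->
  abs_max_pt q xk1 Mk1 -> abs_min_pt q xk1 mk1 ->
  H2 Mk > H2 Mk1 /\ H2 mk > H2 mk1.
Proof.
  intros Hp Hq0 Hg Hpq Hk1 Hk2 HPk HPk1 [j1 [_ [_ HMk]]] [j2 [_ [_ Hmk]]] [j3 [_ [_ HMk1]]] [j4 [_ [_ Hmk1]]].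
  rewrite HMk, Hmk, HMk1, Hmk1.
  assert (Hp1 : (1 <= p)%nat) by lia.
  assert (Hq : (k + 2*p + 2 <= q)%nat) by lia.
  destruct (orbit_facts q p k xk Hp1 Hk1 ltac:(lia) HPk)
    as [Xb [Xinc [X0 [X1 [X1' [X2 [X2' [XM Xm]]]]]]]].
  destruct (orbit_facts q p (k+1) xk1 Hp1 ltac:(lia) ltac:(lia) HPk1)
    as [Yb [Yinc [Y0 [Y1 [Y1' [Y2 [Y2' [YM Ym]]]]]]]].
  set (E := fun j => xk j > xk1 j).
  set (S := fun i => xk1 (i+1)%nat > xk i).
  assert (e1 : forall j, (1 <= j <= k)%nat -> E (j + p)%nat -> E j).
  { unfold E; intros j Hj H. rewrite X0, Y0 in H by lia. lra. }
  assert (e2 : forall j, (k+2*p+2 <= j <= q)%nat -> E (j - p)%nat -> E j).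
  { unfold E; intros j Hj H. rewrite X2, Y2 in H by lia. lra. }
  assert (e3 : forall j, (k+2 <= j <= k+p)%nat -> S (q-j+k+1)%nat -> E j).
  { unfold E, S; intros j Hj H. rewrite X1 in H by lia.
    replace (q - j + k + 1 + 1)%nat with (q - j + (k+1) + 1)%nat in H by lia.
    rewrite Y1 in H by lia. lra. }
  assert (e4 : forall j, (k+p+2 <= j <= k+2*p-1)%nat -> S (2*p+k+1-j)%nat -> E j).
  { unfold E, S; intros j Hj H. rewrite X1' in H by lia.
    replace (2*p + k + 1 - j + 1)%nat with (2*p + (k+1) + 1 - j)%nat in H by lia.
    rewrite Y1' in H by lia. lra. }
  assert (s1 : forall i, (1 <= i <= k)%nat -> S (i + p)%nat -> S i).
  { unfold S; intros i Hi H. rewrite X0 in H by lia.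
    replace (i + p + 1)%nat with (i + 1 + p)%nat in H by lia.
    rewrite Y0 in H by lia. lra. }
  assert (s2 : forall i, (k+1 <= i <= k+p)%nat -> E (q-i+k+1)%nat -> S i).
  { unfold E, S; intros i Hi H. rewrite X1 in H by lia.
    replace (q - i + k + 1)%nat with (q - (i+1) + (k+1) + 1)%nat in H by lia.
    rewrite Y1 in H by lia. lra. }
  assert (s3 : forall i, (k+p+1 <= i <= k+2*p-1)%nat -> E (2*p+k+1-i)%nat -> S i).
  { unfold E, S; intros i Hi H. rewrite X1' in H by lia.
    replace (2*p + k + 1 - i)%nat with (2*p + (k+1) + 1 - (i+1))%nat in H by lia.
    rewrite Y1' in H by lia. lra. }
  assert (s4 : forall i, (k+2*p+1 <= i <= q-1)%nat -> S (i - p)%nat -> S i).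
  { unfold S; intros i Hi H. rewrite X2 in H by lia.
    replace (i - p + 1)%nat with (i + 1 - p)%nat in H by lia.
    rewrite Y2 in H by lia. lra. }
  assert (HY1 : xk1 1%nat < 1/3).
  { assert (H := Y0 1%nat ltac:(lia)).
    assert (xk1 (1 + p)%nat < xk1 q) by (apply Yinc; lia).
    assert (xk1 q <= 1) by (apply Yb; lia). lra. }
  assert (ev1 : E (k+1)%nat).
  { unfold E. assert (H := Y0 (k+1)%nat ltac:(lia)).
    assert (xk1 (k + 1 + p)%nat < xk1 q) by (apply Yinc; lia).
    assert (xk1 q <= 1) by (apply Yb; lia). lra. }
  assert (ev2 : E (k+2*p)%nat).
  { unfold E. assert (xk1 1%nat >= 0) by (apply Rle_ge, Yb; lia).
    destruct (Nat.eq_dec p 1) as [->|Hp2].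
    - assert (Hy := Y1 (k+2)%nat ltac:(lia)).
      replace (q - (k+2) + (k+1) + 1)%nat with q in Hy by lia.
      assert (xk1 1%nat < xk1 q) by (apply Yinc; lia).
      replace (k + 2*1)%nat with (k+2)%nat in Xm |- * by lia. lra.
    - assert (Hy := Y1' (k+2*p)%nat ltac:(lia)).
      replace (2*p + (k+1) + 1 - (k+2*p))%nat with 2%nat in Hy by lia.
      assert (xk1 1%nat < xk1 2%nat) by (apply Yinc; lia). lra. }
  assert (ev3 : E (k+2*p+1)%nat).
  { unfold E. assert (H := X2 (k+2*p+1)%nat ltac:(lia)).
    replace (k + 2*p + 1 - p)%nat with (k+p+1)%nat in H by lia.
    replace (k + 2*p + 1)%nat with (k + 1 + 2*p)%nat in H |- * by lia.
    assert (xk (k+1)%nat <= xk (k+p+1)%nat) by (left; apply Xinc; lia).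
    lra. }
  split.
  - destruct (startQ p q k Hp1 Hg) as [n Hn].
    change (E q). apply (roundQ p q k E S Hp1 Hk1 Hq e2 e4 ev2 ev3 s1 s2 n q); [lia|exact Hn].
  - destruct (start1 p q k Hp1 Hg) as [n [Hn Hbad]].
    change (E 1%nat). apply (round1 p q k E S Hp1 Hk1 Hq e1 e3 ev1 s3 s4 n 1%nat); [lia| |].
    + exact Hn.
    + exact Hbad.
Qed.
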